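(* Suppose $\alpha=r\beta+s$ with $r,s\in\mathbb{Q}^d$ and $\beta\in\mathbb{R}$, and let $\mathcal{D}=[0,1)^d$. Then \[\sup_{T_1,\ldots,T_d\geq 1} G(\alpha,\mathcal{D}_T)<\infty .\]
   Context: For a bounded set $\mathcal{D}\subset\mathbb{R}^d$ and $\alpha\in\mathbb{R}^d$, let $S(\alpha,\mathcal{D})=\{m\cdot\alpha \bmod 1 \mid m\in\mathbb{Z}^d\cap\mathcal{D}\}\subset\mathbb{R}/\mathbb{Z}$, and let $G(\alpha,\mathcal{D})$ be the number of distinct lengths of the gaps between consecutive elements of $S(\alpha,\mathcal{D})$ on the circle $\mathbb{R}/\mathbb{Z}$. For $T=\operatorname{diag}(T_1,\ldots,T_d)$ with $T_i>0$, $\mathcal{D}_T=\{xT\mid x\in\mathcal{D}\}$, so here $\mathcal{D}_T=[0,T_1)\times\cdots\times[0,T_d)$. *)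

(* Defs.v *)
From HB Require Import structures.
From mathcomp Require Import all_boot all_order all_algebra.
From mathcomp Require Import finmap.
From mathcomp Require Import boolp classical_sets functions cardinality reals.
Set Implicit Arguments. Unset Strict Implicit. Unset Printing Implicit Defensive.
Import Order.TTheory GRing.Theory Num.Theory.
Local Open Scope classical_set_scope.
Local Open Scope ring_scope.

Section Defs.
Variables (R : realType) (d : nat).

Definition frac (x : R) : R := x - (Num.floor x)%:~R.

Definition dotZ (m : 'I_d -> int) (alpha : 'I_d -> R) : R :=
  \sum_(i < d) (m i)%:~R * alpha i.

Definition unit_box : set ('I_d -> R) := [set x | forall i, 0 <= x i < 1].

Definition scaleD (D : set ('I_d -> R)) (T : 'I_d -> R) : set ('I_d -> R) :=
  [set (fun i => x i * T i) | x in D].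

Definition Sset (alpha : 'I_d -> R) (D : set ('I_d -> R)) : set R :=
  [set frac (dotZ m alpha) | m in [set m : 'I_d -> int | D (fun i => (m i)%:~R)]].

End Defs.

(* counterclockwise distance on R/Z from x to y, taking values in (0,1]
   (a point is at distance 1, a full turn, from itself) *)
Definition fwd_dist (R : realType) (x y : R) : R :=
  if frac (y - x) == 0 then 1 else frac (y - x).

Definition gap_at (R : realType) (S : set R) (x g : R) : Prop :=
  (exists2 y, S y & g = fwd_dist x y) /\ (forall y, S y -> g <= fwd_dist x y).

Definition gap_lengths (R : realType) (S : set R) : set R :=
  [set g | exists2 x, S x & gap_at S x g].

Definition Gnum (R : realType) (d : nat) (alpha : 'I_d -> R) (D : set ('I_d -> R)) : nat :=
  #|` fset_set (gap_lengths (Sset alpha D)) |.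

(* Main.v *)
Require Import Defs.
From HB Require Import structures.
From mathcomp Require Import all_boot all_order all_algebra.
From mathcomp Require Import finmap.
From mathcomp Require Import boolp classical_sets functions cardinality reals.
From mathcomp Require Import lra zify ring.
Set Implicit Arguments. Unset Strict Implicit.
Import Order.TTheory GRing.Theory Num.Theory.
Local Open Scope ring_scope.
Local Notation frac := Defs.frac.
Local Open Scope classical_set_scope.
Local Open Scope classical_set_scope.
Section Frac.
Variable R : realType.
Implicit Types a b x y z : R.

Definition cong a b := exists m : int, a - b = m%:~R.

Lemma cong_refl a : cong a a.
Proof. by exists 0; rewrite subrr. Qed.
Lemma cong_sym a b : cong a b -> cong b a.
Proof. by case=> m h; exists (- m); rewrite intrN -h opprB. Qed.
Lemma cong_trans a b c : cong a b -> cong b c -> cong a c.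
Proof. case=> m h [k h']; exists (m + k); rewrite intrD -h -h'; ring. Qed.
Lemma cong_add a b c e : cong a b -> cong c e -> cong (a + c) (b + e).
Proof. case=> m h [k h']; exists (m + k); rewrite intrD -h -h'; ring. Qed.
Lemma cong_opp a b : cong a b -> cong (- a) (- b).
Proof. case=> m h; exists (- m); rewrite intrN -h; ring. Qed.
Lemma cong_sub a b c e : cong a b -> cong c e -> cong (a - c) (b - e).
Proof. by move=> h1 h2; apply: cong_add => //; apply: cong_opp. Qed.
Lemma cong_int a (m : int) : cong (a + m%:~R) a.
Proof. by exists m; ring. Qed.

Lemma frac_ge0 x : 0 <= frac x.
Proof. by rewrite /frac subr_ge0 floor_le. Qed.
Lemma frac_lt1 x : frac x < 1.
Proof. by rewrite /frac ltrBlDr addrC -[_ + 1]/(_ + 1%:~R) -intrD floorD1_gt. Qed.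
Lemma frac_cong x : cong (frac x) x.
Proof. by exists (- Num.floor x); rewrite /frac intrN; ring. Qed.
Lemma cong_frac a b : cong a b -> frac a = frac b.
Proof.
case=> m h; have -> : a = b + m%:~R by rewrite -h; ring.
rewrite /frac floorDrz ?intr_int // intrKfloor intrD; ring.
Qed.
Lemma frac_congE a b : frac a = frac b -> cong a b.
Proof.
move=> h; apply: (cong_trans (cong_sym (frac_cong a))).
by rewrite h; apply: frac_cong.
Qed.
Lemma frac_id x : 0 <= x < 1 -> frac x = x.
Proof.
move=> /andP[h0 h1]; rewrite /frac (_ : Num.floor x = 0) ?subr0 //.
by apply: floor_def; rewrite h0 /= add0r.
Qed.
Lemma cong01 a b : 0 <= a < 1 -> 0 <= b < 1 -> cong a b -> a = b.
Proof. by move=> ha hb /cong_frac; rewrite !frac_id. Qed.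

Lemma fwd_cong x y : cong (fwd_dist x y) (y - x).
Proof.
rewrite /fwd_dist; case: eqP => h; last exact: frac_cong.
apply: (cong_trans (b:=0)); first by exists 1; rewrite subr0.
by rewrite -h; apply: frac_cong.
Qed.
Lemma fwd_gt0 x y : 0 < fwd_dist x y.
Proof.
rewrite /fwd_dist; case: eqP => h //; rewrite lt_neqAle eq_sym.
by apply/andP; split; [apply/eqP|apply: frac_ge0].
Qed.
Lemma fwd_le1 x y : fwd_dist x y <= 1.
Proof. by rewrite /fwd_dist; case: eqP => h //; apply/ltW/frac_lt1. Qed.
Lemma fwd_eq x y v : 0 < v < 1 -> cong v (y - x) -> fwd_dist x y = v.
Proof.
move=> /andP[v0 v1] hc; have hf : frac (y - x) = v.
  by rewrite -(cong_frac hc) frac_id // (ltW v0) v1.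
by rewrite /fwd_dist hf; case: eqP => // h; move: v0; rewrite h ltxx.
Qed.
Lemma fwd_congr x y x' y' : cong (y - x) (y' - x') -> fwd_dist x y = fwd_dist x' y'.
Proof. by rewrite /fwd_dist => /cong_frac ->. Qed.

Lemma fwd_between x w y : fwd_dist w y < fwd_dist x y ->
  fwd_dist x w = fwd_dist x y - fwd_dist w y.
Proof.
move=> h; apply: fwd_eq.
  have := fwd_gt0 w y; have := fwd_le1 x y; rewrite subr_gt0 h /=; lra.
apply: (cong_trans (cong_sub (fwd_cong x y) (fwd_cong w y))).
by exists 0; ring.
Qed.
End Frac.
Section Gap.
Variables (R : realType) (I : finType) (c : I -> R) (n : I -> nat) (th : R).

Definition US : set R :=
  [set x | exists i j, (j < n i)%N /\ x = frac (c i + j%:R * th)].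

Lemma US01 x : US x -> 0 <= x < 1.
Proof. by case=> i [j [_ ->]]; rewrite frac_ge0 frac_lt1. Qed.

Lemma US_first x : US x -> ~ US (frac (x - th)) ->
  exists i, (0 < n i)%N /\ x = frac (c i).
Proof.
case=> i [[|j] [hj ->]] hn.
  by exists i; split; [apply: leq_ltn_trans hj|rewrite mul0r addr0].
exfalso; apply: hn; exists i, j; split; first by apply: ltnW.
apply: cong_frac; apply: (cong_trans (cong_sub (frac_cong _) (cong_refl th))).
by exists 0; rewrite -[j.+1]addn1 natrD; ring.
Qed.

Definition lastp i := frac (c i + (n i).-1%:R * th).

Lemma US_last z : US z -> ~ US (frac (z + th)) ->
  exists i, (0 < n i)%N /\ z = lastp i.
Proof.
case=> i [j [hj ->]] hn; exists i; split; first by apply: leq_ltn_trans hj.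
case: (ltnP j.+1 (n i)) => h.
  exfalso; apply: hn; exists i, j.+1; split => //.
  apply: cong_frac; apply: (cong_trans (cong_add (frac_cong _) (cong_refl th))).
  by exists 0; rewrite -[j.+1]addn1 natrD; ring.
have -> : j = (n i).-1 by lia.
by [].
Qed.

Lemma gap_uniq x g1 g2 : gap_at US x g1 -> gap_at US x g2 -> g1 = g2.
Proof.
move=> [[y1 S1 e1] h1] [[y2 S2 e2] h2]; apply/eqP; rewrite eq_le.
have a := h1 _ S2; have b := h2 _ S1; rewrite -e2 in a; rewrite -e1 in b.
by rewrite a b.
Qed.

Definition bgap_at (y g : R) :=
  (exists2 x, US x & g = fwd_dist x y) /\ (forall x, US x -> g <= fwd_dist x y).

Lemma bgap_uniq y g1 g2 : bgap_at y g1 -> bgap_at y g2 -> g1 = g2.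
Proof.
move=> [[y1 S1 e1] h1] [[y2 S2 e2] h2]; apply/eqP; rewrite eq_le.
have a := h1 _ S2; have b := h2 _ S1; rewrite -e2 in a; rewrite -e1 in b.
by rewrite a b.
Qed.

Definition Pgap (p : I * 'I_3) (g : R) : Prop :=
  let i := p.1 in
  match val p.2 with
  | 0%N => gap_at US (frac (c i)) g
  | 1%N => bgap_at (frac (c i)) g
  | _ => exists x, [/\ US x, gap_at US x g & fwd_dist (frac (x - th)) (lastp i) < g]
  end.

Lemma Pgap_uniq p g1 g2 : Pgap p g1 -> Pgap p g2 -> g1 = g2.
Proof.
case: p => i [[|[|t]] ht] /=; first exact: gap_uniq.
  exact: bgap_uniq.
move=> [x1 [S1 G1 L1]] [x2 [S2 G2 L2]].
suff ex : x1 = x2 by move: G1; rewrite ex => G1; apply: gap_uniq G1 G2.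
set z := lastp i in L1 L2.
set a := fwd_dist (frac (x1 - th)) z in L1.
set b := fwd_dist (frac (x2 - th)) z in L2.
have key : forall x1 x2 g2, US x1 -> gap_at US x2 g2 ->
   fwd_dist (frac (x1 - th)) z < fwd_dist (frac (x2 - th)) z ->
   fwd_dist (frac (x2 - th)) z < g2 -> False.
  move=> y1 y2 h2 Sy1 [_ Gy2] lt ltg.
  have := fwd_between lt.
  rewrite (fwd_congr (x:=frac (y2 - th)) (y:=frac (y1 - th)) (x':=y2) (y':=y1)).
    move=> e; have := Gy2 _ Sy1; rewrite e.
    have := fwd_gt0 (frac (y1 - th)) z; lra.
  apply: (cong_trans (cong_sub (frac_cong _) (frac_cong _))).
  by exists 0; ring.
case: (ltgtP a b) => hab.
- by exfalso; apply: (key x1 x2 _ S1 G2 hab L2).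
- by exfalso; apply: (key x2 x1 _ S2 G1 hab L1).
apply: cong01; [exact: US01|exact: US01|].
have h1 := fwd_cong (frac (x1 - th)) z.
have h2 := fwd_cong (frac (x2 - th)) z.
rewrite -/a -/b hab in h1.
have := cong_trans (cong_sym h1) h2.
have f1 := frac_cong (x1 - th); have f2 := frac_cong (x2 - th).
case: (f1) => m1 e1; case: f2 => m2 e2; case=> m e.
exists (m2 - m1 - m); rewrite !intrD !intrN -e -e1 -e2; ring.
Qed.
Lemma card_finT (T : finType) (A : set T) : (A #<= `I_#|T|)%card.
Proof.
pose h := fun t : T => val (enum_rank t).
have hinj : {in [set: T] &, injective h}.
  by move=> x y _ _ /val_inj /enum_rank_inj.
apply: (card_le_trans (B := [set: T])); first exact: card_leT.
apply: (card_le_trans (B := h @` [set: T])).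
  by have := inj_card_eq hinj; rewrite card_eq_sym card_eq_le => /andP[].
apply: subset_card_le => _ [t _ <-] /=; exact: ltn_ord.
Qed.

Lemma card_fset_image_le (T : finType) (U : choiceType) (f : T -> U) (A : set U) :
  A `<=` f @` [set: T] -> (#|` fset_set A| <= #|T|)%N.
Proof.
move=> sub; apply: geq_card_fset_set.
apply: (card_le_trans (B := f @` [set: T])); first exact: subset_card_le.
apply: (card_le_trans (B := [set: T])); first exact: card_image_le.
exact: card_finT.
Qed.
Lemma US_mem i j : (j < n i)%N -> US (frac (c i + j%:R * th)).
Proof. by move=> h; exists i, j. Qed.

Lemma descent j : forall i g, (j < n i)%N ->
  gap_at US (frac (c i + j%:R * th)) g -> exists p, Pgap p g.
Proof.
elim: j => [|j IH] i g hj G.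
  by exists (i, Ordinal (isT : (0 < 3)%N)); rewrite /Pgap /=; move: G; rewrite mul0r addr0.
set x := frac (c i + j.+1%:R * th) in G.
have Sx : US x by apply: US_mem.
case: (G) => [[y Sy ey] hy].
case: (pselect (US (frac (y - th)))) => Sy'; last first.
  have [i' [_ yE]] := US_first Sy Sy'.
  exists (i', Ordinal (isT : (1 < 3)%N)); rewrite /Pgap /=; rewrite -yE.
  split; first by exists x.
  move=> w Sw; rewrite leNgt; apply/negP => lt.
  rewrite ey in lt; have := fwd_between lt; rewrite -ey => e.
  have := hy _ Sw; rewrite e; have := fwd_gt0 w y; lra.
case: (pselect (exists z, [/\ US z, ~ US (frac (z + th)) &
          fwd_dist (frac (x - th)) z < g])) => [[z [Sz nz lt]]|nex].
  have [i' [_ zE]] := US_last Sz nz.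
  exists (i', Ordinal (isT : (2 < 3)%N)); rewrite /Pgap /=.
  by exists x; split => //; rewrite -zE.
apply: (IH i g (ltnW hj)).
set x' := frac (c i + j%:R * th).
have cx : cong (frac (x - th)) x'.
  apply: (cong_trans (frac_cong _)); apply: cong_sym.
  apply: (cong_trans (frac_cong _)).
  case: (frac_cong (c i + j.+1%:R * th)) => m e.
  exists (- m); rewrite /x intrN -e -[j.+1]addn1 natrD; ring.
clearbody x x'.
split.
  exists (frac (y - th)) => //; rewrite ey; apply: fwd_congr.
  case: (frac_cong (y - th)) => m1 e1; case: cx => m2 e2.
  case: (frac_cong (x - th)) => m3 e3.
  exists (m3 - m1 - m2); rewrite !intrD !intrN -e1 -e2 -e3; ring.
move=> z Sz; rewrite leNgt; apply/negP => lt.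
have ex : fwd_dist x' z = fwd_dist (frac (x - th)) z.
  apply: fwd_congr; apply: cong_sub; [exact: cong_refl|exact: cong_sym].
case: (pselect (US (frac (z + th)))) => Sz'; last first.
  by apply: nex; exists z; split => //; rewrite -ex.
have := hy _ Sz'.
suff -> : fwd_dist x (frac (z + th)) = fwd_dist x' z by rewrite leNgt lt.
apply: fwd_congr.
case: (frac_cong (z + th)) => m1 e1; case: cx => m2 e2.
case: (frac_cong (x - th)) => m3 e3.
exists (m1 - m2 + m3); rewrite !intrD !intrN -e1 -e2 -e3; ring.
Qed.

Lemma gaps_sub : gap_lengths US `<=` (fun p => xget 0 (Pgap p)) @` [set: I * 'I_3].
Proof.
move=> g [x [i [j [hj ->]]] G].
have [p Pp] := descent hj G.
exists p => //; apply: xget_unique => // g' Pg'; exact: Pgap_uniq Pg' Pp.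
Qed.

Lemma gap_count : (#|` fset_set (gap_lengths US)| <= #|I| * 3)%N.
Proof.
have := card_fset_image_le gaps_sub.
by rewrite card_prod card_ord.
Qed.
End Gap.
Lemma denq_absr (x : rat) : (`|denq x|%N)%:R = (denq x)%:~R :> rat.
Proof. by rewrite natr_absz gtr0_norm ?denq_gt0. Qed.

Lemma ratdecomp d (r s : 'I_d -> rat) : exists (Q : 'I_d -> nat) (eps z : 'I_d -> int) (M : nat),
  forall i, [/\ (0 < Q i)%N, (eps i = 0 \/ eps i = 1 \/ eps i = -1),
    (Q i)%:R * r i = (eps i)%:~R * M%:R & (Q i)%:R * s i = (z i)%:~R].
Proof.
pose a i := numq (r i); pose b i := `|denq (r i)|%N.
pose e i := numq (s i); pose f i := `|denq (s i)|%N.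
pose w j := if a j == 0 then 1%N else `|a j|%N.
pose F := (\prod_j f j)%N; pose P := (\prod_j w j)%N.
pose Pi i := (\prod_(j | j != i) w j)%N; pose Fi i := (\prod_(j | j != i) f j)%N.
exists (fun i => if a i == 0 then f i else (Pi i * b i * F)%N).
exists (fun i => if a i == 0 then 0 else if 0 < a i then 1 else -1).
exists (fun i => if a i == 0 then e i else (Pi i * b i * Fi i)%N%:Z * e i).
exists (P * F)%N => i.
have fpos j : (0 < f j)%N by rewrite absz_gt0 gt_eqF ?denq_gt0.
have bpos j : (0 < b j)%N by rewrite absz_gt0 gt_eqF ?denq_gt0.
have wpos j : (0 < w j)%N by rewrite /w; case: eqP => // /eqP; rewrite absz_gt0.
have FE : F = (f i * Fi i)%N by rewrite /F (bigD1 i).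
have PE : P = (w i * Pi i)%N by rewrite /P (bigD1 i).
have sE : s i = (e i)%:~R / (f i)%:R by rewrite denq_absr numqE mulfK // intr_eq0 gt_eqF ?denq_gt0.
have rE : r i = (a i)%:~R / (b i)%:R by rewrite denq_absr numqE mulfK // intr_eq0 gt_eqF ?denq_gt0.
have fn0 : (f i)%:R != 0 :> rat by rewrite pnatr_eq0 -lt0n.
have bn0 : (b i)%:R != 0 :> rat by rewrite pnatr_eq0 -lt0n.
case: ifP => a0.
  split => //; first by left.
    by rewrite rE (eqP a0) mul0r mulr0 !mul0r.
  by rewrite sE mulrC mulfVK.
split.
- by rewrite !muln_gt0 bpos /F prodn_gt0 // /Pi prodn_gt0.
- by right; case: ifP; [left|right].
- rewrite rE PE FE /w a0 !natrM.
  have -> : (a i)%:~R = (if 0 < a i then 1 else -1) * (`|a i|%N)%:R :> rat.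
    rewrite natr_absz; case: ifP => h; first by rewrite mul1r gtr0_norm.
    have hn : a i < 0 by rewrite lt_neqAle a0 /= leNgt h.
    by rewrite ltr0_norm // mulN1r intrN opprK.
  case: ifP => _; rewrite ?rmorphN ?rmorph1 /=; field; exact: bn0.
- rewrite intrM; have -> : ((Pi i * b i * Fi i)%N%:~R : rat) = (Pi i * b i * Fi i)%N%:R by [].
  rewrite sE FE !natrM.
  field; exact: fn0.
Qed.
Lemma sum_range d (B : nat -> nat) j : (j <= \sum_(0 <= i < d) B i)%N ->
  exists w : nat -> nat, (forall i, w i <= B i)%N /\ \sum_(0 <= i < d) w i = j.
Proof.
elim: d j => [|d IH] j.
  rewrite big_geq // leqn0 => /eqP ->; exists (fun _ => 0%N); split => //.
  by rewrite big_geq.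
rewrite big_nat_recr //= => hj.
have [w [hw sw]] := IH (j - minn j (B d))%N (ltac:(lia)).
exists (fun i => if i == d then minn j (B d) else w i); split.
  by move=> i; case: eqP => [->|_]; [apply: geq_minr|apply: hw].
rewrite big_nat_recr //= eqxx.
rewrite (@eq_big_nat _ _ _ 0 d _ w); last first.
  by move=> i /andP[_ hi]; rewrite (ltn_eqF hi).
rewrite sw; lia.
Qed.

Lemma sum_range_ord d (B : 'I_d -> nat) j : (j <= \sum_i B i)%N ->
  exists w : 'I_d -> nat, (forall i, w i <= B i)%N /\ \sum_i w i = j.
Proof.
pose B' (k : nat) := if insub k is Some i then B i else 0%N.
have BE (i : 'I_d) : B' i = B i by rewrite /B' valK.
move=> hj; have [|w [hw sw]] := @sum_range d B' j.
  by rewrite big_mkord (eq_bigr _ (fun i _ => BE i)).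
exists (fun i => w i); split; last by rewrite -sw big_mkord.
by move=> i; rewrite -BE.
Qed.
Lemma inDT (R : realType) d (T : 'I_d -> R) (hT : forall i, 0 < T i) (m : 'I_d -> int) :
  scaleD (@unit_box R d) T (fun i => (m i)%:~R) <-> forall i, 0 <= ((m i)%:~R : R) < T i.
Proof.
split.
  case=> x hx e i; have ei : x i * T i = (m i)%:~R := congr1 (fun f => f i) e.
  rewrite -ei; have /andP[h0 h1] := hx i; have := hT i => t0.
  apply/andP; split; nra.
move=> h; exists (fun i => (m i)%:~R / T i).
  move=> i; have /andP[h0 h1] := h i; have := hT i => t0.
  by rewrite divr_ge0 ?(ltW t0) //= ltr_pdivrMr // mul1r.
by apply: funext => i /=; rewrite mulfVK // gt_eqF.
Qed.

Lemma exN (R : realType) (T : R) : 1 <= T ->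
  exists N : nat, (0 < N)%N /\ forall k : nat, (k%:R < T) = (k < N)%N.
Proof.
move=> h1; have c0 : 0 < Num.ceil T by rewrite ceil_gt0; lra.
exists `|Num.ceil T|%N; split; first by rewrite absz_gt0 gt_eqF.
move=> k; rewrite -[k%:R]/((k%:Z)%:~R) -ceil_gt_int.
by rewrite -{1}(gez0_abs (ltW c0)) ltz_nat.
Qed.
Section Reduce.
Variables (R : realType) (d : nat) (alpha : 'I_d -> R) (Q : 'I_d -> nat)
  (eps z : 'I_d -> int) (th : R) (N : 'I_d -> nat) (Qm : nat).
Hypotheses (Qpos : forall i, (0 < Q i)%N)
  (epsE : forall i, eps i = 0 \/ eps i = 1 \/ eps i = -1)
  (QaE : forall i, (Q i)%:R * alpha i = (eps i)%:~R * th + (z i)%:~R)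
  (QmE : forall i, (Q i <= Qm)%N).

Definition Mi i (v : nat) : nat := ((N i - v + (Q i).-1) %/ Q i)%N.
Lemma MiP i v u : (u < Mi i v)%N = (Q i * u + v < N i)%N.
Proof.
rewrite /Mi; have q0 := Qpos i.
rewrite ltnNge -ltnS ltn_divLR // -leqNgt.
apply/idP/idP => h; nia.
Qed.

Definition lo i v : nat := if eps i == -1 then (Mi i v).-1 else 0%N.
Definition Bd i v : nat := if eps i == 0 then 0%N else (Mi i v).-1.
Definition Ix := {ffun 'I_d -> 'I_Qm}.
Definition valid (v : Ix) : bool := [forall i, (v i < Q i)%N && (v i < N i)%N].
Definition cv (v : Ix) : R :=
  \sum_i (v i)%:R * alpha i - (\sum_i lo i (v i))%:R * th.
Definition nv (v : Ix) : nat := if valid v then (\sum_i Bd i (v i)).+1 else 0%N.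

Lemma dot_cong (v : Ix) (u w : 'I_d -> nat) :
  (forall i, (w i)%:Z - (lo i (v i))%:Z = eps i * (u i)%:Z) ->
  cong (dotZ (fun i => (Q i * u i + v i)%N%:Z) alpha) (cv v + (\sum_i w i)%:R * th).
Proof.
move=> hw; exists (\sum_i ((u i)%:Z * z i)).
have hwR i : (w i)%:R = (lo i (v i))%:R + (eps i)%:~R * (u i)%:R :> R.
  have := congr1 (fun x : int => x%:~R : R) (hw i); rewrite /= intrD intrN intrM.
  move=> h; rewrite -[(w i)%:R]/((w i)%:Z%:~R) -[(lo _ _)%:R]/((lo i (v i))%:Z%:~R).
  rewrite -[(u i)%:R]/((u i)%:Z%:~R) -h; ring.
rewrite /dotZ /cv rmorph_sum /= !natr_sum.
transitivity (\sum_i (((Q i * u i + v i)%N%:Z)%:~R * alpha i - (v i)%:R * alpha i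
    + (lo i (v i))%:R * th - (w i)%:R * th)).
  rewrite sumrB big_split /= sumrB -!mulr_suml; ring.
rewrite rmorph_sum; apply: eq_bigr => i _.
rewrite hwR -[((Q i * u i + v i)%N%:Z)%:~R]/((Q i * u i + v i)%N%:R) natrD natrM.
transitivity ((u i)%:R * ((Q i)%:R * alpha i) - (eps i)%:~R * (u i)%:R * th); first by ring.
rewrite QaE /= rmorphM /=; ring.
Qed.

Lemma Sset_eq (T : 'I_d -> R) (hT : forall i, 0 < T i)
  (hN : forall i (k : nat), (k%:R < T i) = (k < N i)%N) :
  Sset alpha (scaleD (@unit_box R d) T) = US cv nv th.
Proof.
apply/seteqP; split.
- move=> _ [m /= hm <-].
  have hb := (inDT hT m).1 hm.
  pose mn i := `|m i|%N.
  have mnE i : m i = (mn i)%:Z.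
    by rewrite /mn gez0_abs //; have /andP[h _] := hb i; rewrite ler0z in h.
  have mnN i : (mn i < N i)%N.
    by rewrite -hN; have /andP[_ h] := hb i; rewrite mnE in h.
  have vQ i : (mn i %% Q i < Qm)%N by apply: leq_trans (ltn_pmod _ (Qpos i)) (QmE i).
  pose v : Ix := [ffun i => Ordinal (vQ i)].
  have vE i : (v i : nat) = (mn i %% Q i)%N by rewrite ffunE.
  pose u i := (mn i %/ Q i)%N.
  have mE : m = fun i => (Q i * u i + v i)%N%:Z.
    by apply: funext => i; rewrite mnE vE /u mulnC -divn_eq.
  have uM i : (u i < Mi i (v i))%N by rewrite MiP /u vE mulnC -divn_eq.
  pose w i := if eps i == 1 then u i else if eps i == -1 then ((Mi i (v i)).-1 - u i)%N else 0%N.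
  exists v, (\sum_i w i); split.
    rewrite /nv; have -> : valid v.
      apply/forallP => i; rewrite vE ltn_pmod //=.
      by apply: leq_ltn_trans (leq_mod _ _) (mnN i).
    rewrite ltnS; apply: leq_sum => i _; rewrite /w /Bd.
    have := uM i; case: (epsE i) => [->|[->|->]] //= h; lia.
  rewrite mE; apply: cong_frac; apply: dot_cong => i.
  have := uM i; rewrite /w /lo; case: (epsE i) => [->|[->|->]] //= h; lia.
- move=> x [v [j [hj ->]]].
  have vv : valid v by move: hj; rewrite /nv; case: (valid v).
  move: hj; rewrite /nv vv ltnS => hj.
  have [w [hw sw]] := sum_range_ord hj.
  have vN i : (v i < N i)%N by have := forallP vv i => /andP[].
  have M0 i : (0 < Mi i (v i))%N by rewrite MiP muln0 add0n.
  pose u i := if eps i == 1 then w i else if eps i == -1 then ((Mi i (v i)).-1 - w i)%N else 0%N.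
  have uM i : (u i < Mi i (v i))%N.
    have := M0 i; have := hw i; rewrite /u /Bd.
    case: (epsE i) => [->|[->|->]] //= h1 h2; lia.
  exists (fun i => (Q i * u i + v i)%N%:Z).
    apply/(inDT hT) => i; rewrite ler0z /= -[((_ + _)%N%:Z)%:~R]/((Q i * u i + v i)%N%:R).
    by rewrite hN -MiP.
  rewrite -sw; apply: cong_frac; apply: dot_cong => i.
  have := uM i; have := hw i; rewrite /u /lo /Bd.
  case: (epsE i) => [->|[->|->]] //= h1 h2; lia.
Qed.
End Reduce.
Lemma ceilN (R : realType) (T : R) : 1 <= T ->
  forall k : nat, (k%:R < T) = (k < `|Num.ceil T|%N)%N.
Proof.
move=> h1; have c0 : 0 < Num.ceil T by rewrite ceil_gt0; lra.
move=> k; rewrite -[k%:R]/((k%:Z)%:~R) -ceil_gt_int.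
by rewrite -{1}(gez0_abs (ltW c0)) ltz_nat.
Qed.

Unset Implicit Arguments.

Theorem theorem1p4 (R : realType) (d : nat) (r s : 'I_d -> rat) (beta : R)
    (alpha : 'I_d -> R)
    (Halpha : forall i, alpha i = ratr (r i) * beta + ratr (s i)) :
  exists B : nat, forall T : 'I_d -> R, (forall i, 1 <= T i) ->
    (Gnum alpha (scaleD (@unit_box R d) T) <= B)%N.
Proof.
have [Q [eps [z [M hQ]]]] := ratdecomp r s.
pose th := M%:R * beta.
have Qpos i : (0 < Q i)%N by case: (hQ i).
have epsE i : eps i = 0 \/ eps i = 1 \/ eps i = -1 by case: (hQ i).
have QaE i : (Q i)%:R * alpha i = (eps i)%:~R * th + (z i)%:~R.
  case: (hQ i) => _ _ e1 e2.
  have e1' := congr1 (fun q : rat => ratr q : R) e1.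
  have e2' := congr1 (fun q : rat => ratr q : R) e2.
  move: e1' e2'; rewrite /= !rmorphM /= !ratr_nat !ratr_int => e1' e2'.
  by rewrite Halpha mulrDr mulrA e1' e2' /th; ring.
pose Qm := (\max_i Q i)%N.
have QmE i : (Q i <= Qm)%N by apply: leq_bigmax.
exists (#|{: {ffun 'I_d -> 'I_Qm}}| * 3)%N => T hT.
have hT0 i : 0 < T i by have := hT i; lra.
have hN i k := @ceilN R (T i) (hT i) k.
rewrite /Gnum (Sset_eq Qpos epsE QaE QmE hT0 hN).
exact: gap_count.
Qed.
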